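(* Let $\alpha,n\in\mathbb{N}$ and let $l$ be an integer with $l\geqslant\lfloor n/2^{\alpha}\rfloor\geqslant1$ and $$l\equiv\Big\lfloor\frac n{2^{\alpha}}\Big\rfloor\pmod{2^{\lfloor\log_2(n/2^{\alpha})\rfloor}}.$$ Then $$\operatorname{ord}_2\Bigg(\sum_{k\equiv0\ (\mathrm{mod}\ 2^{\alpha})}\binom nk(-1)^k\Big(\frac k{2^{\alpha}}\Big)^l\Bigg)=\operatorname{ord}_2\Big(\Big\lfloor\frac n{2^{\alpha}}\Big\rfloor!\Big).$$
   Context: $\operatorname{ord}_2$ denotes the $2$-adic order. The sum runs over all integers $k\equiv 0\pmod{2^\alpha}$, with $\binom nk=0$ unless $0\le k\le n$. *)

(* Defs.v *)
From mathcomp Require Import all_boot all_order all_algebra.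
Set Implicit Arguments. Unset Strict Implicit. Unset Printing Implicit Defensive.
Import Order.TTheory GRing.Theory Num.Theory.

(* 2-adic order of an integer (value for 0 is irrelevant: the statement
   separately asserts nonzeroness, matching ord_2(0) = +oo convention). *)
Definition ord2 (z : int) : nat := logn 2 `|z|%N.

(* Main.v *)
Require Import Defs.
From mathcomp Require Import all_boot all_order all_algebra.
From mathcomp Require Import zify ring lra.
Import Order.TTheory GRing.Theory Num.Theory.
Set Implicit Arguments. Unset Strict Implicit. Unset Printing Implicit Defensive.

(* Proof outline: iterated even-part of (1-x)^n keeps a 2-adic "Taylor"
   invariant (Phi), plus parity of Stirling numbers of the second kind. *)

Definition Fv x := logn 2 x`!.

Lemma FvS x : Fv x.+1 = logn 2 x.+1 + Fv x.
Proof. by rewrite /Fv factS lognM // fact_gt0. Qed.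

Lemma Fv_add x y : Fv x + Fv y <= Fv (x + y).
Proof.
rewrite /Fv -lognM ?fact_gt0 //; apply: dvdn_leq_log; first exact: fact_gt0.
have := bin_fact (leq_addr y x); rewrite addKn => <-.
exact: dvdn_mull.
Qed.

Lemma logn2_odd x : odd x -> logn 2 x = 0.
Proof. by move=> ox; rewrite logn_coprime // coprime2n ox. Qed.

Lemma logn2_double x : 0 < x -> logn 2 x.*2 = (logn 2 x).+1.
Proof. by move=> x0; rewrite -mul2n lognM // (pfactorK 1). Qed.

Lemma Fv_odd a : Fv a.*2.+1 = Fv a.*2.
Proof. by rewrite FvS logn2_odd //= odd_double. Qed.

Lemma Fv_double a : Fv a.*2 = a + Fv a.
Proof.
elim: a => [//|a IH].
rewrite doubleS FvS Fv_odd IH -doubleS logn2_double // FvS; lia.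
Qed.

Lemma Fv_half d : Fv d = d./2 + Fv d./2.
Proof.
rewrite -{1}(odd_double_half d); case: (odd d) => /=; last by rewrite add0n Fv_double.
by rewrite add1n Fv_odd Fv_double.
Qed.

Lemma Fv_lt x : 0 < x -> Fv x < x.
Proof.
elim/ltn_ind: x => x IH x0.
rewrite Fv_half.
have [h0|h0] := posnP x./2.
  rewrite h0 /Fv /= logn1; done.
have hl : x./2 < x.
  by have := odd_double_half x; rewrite -addnn; lia.
have := IH _ hl h0; have := odd_double_half x; rewrite -addnn; lia.
Qed.

Definition bo i t := \sum_(s < i.+1) 'C(i, s.*2.+1) * 'C(s, t).
Definition ae i t := \sum_(s < i.+1) 'C(i, s.*2) * 'C(s, t).

Lemma R1 i t : bo i.+1 t = ae i t + bo i t.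
Proof.
rewrite /bo big_ord_recr /= bin_small; last by rewrite doubleS; lia.
rewrite mul0n addn0.
rewrite (eq_bigr (fun s : 'I_i.+1 => 'C(i, s.*2) * 'C(s, t) + 'C(i, s.*2.+1) * 'C(s, t))).
  by rewrite big_split.
by move=> s _; rewrite binS mulnDl addnC.
Qed.

Lemma R2 i t : ae i.+1 t.+1 = ae i t.+1 + bo i t.+1 + bo i t.
Proof.
rewrite /ae big_ord_recl /= bin0n muln0 add0n.
rewrite (eq_bigr (fun s : 'I_i.+1 => 'C(i, s.*2.+2) * 'C(s.+1, t.+1)
   + 'C(i, s.*2.+1) * 'C(s, t.+1) + 'C(i, s.*2.+1) * 'C(s, t))); last first.
  move=> s _; rewrite /bump /= add1n doubleS binS mulnDl [in X in _ + X]binS mulnDr addnA //.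
rewrite !big_split /=; congr (_ + _ + _).
rewrite [in RHS]big_ord_recl /= bin0n muln0 add0n big_ord_recr /= bin_small ?muln0 ?addn0;
  last by rewrite -!addnn; lia.
by apply: eq_bigr => s _; rewrite /bump /= add1n doubleS.
Qed.

Lemma R2' i : ae i.+1 0 = ae i 0 + bo i 0.
Proof.
rewrite /ae big_ord_recl /= bin0n bin0 muln1.
rewrite (eq_bigr (fun s : 'I_i.+1 => 'C(i, s.*2.+2) + 'C(i, s.*2.+1))); last first.
  by move=> s _; rewrite /bump /= add1n doubleS binS !bin0 !muln1.
rewrite big_split /= addnA; congr (_ + _); last first.
  by rewrite /bo; apply: eq_bigr => s _; rewrite bin0 muln1.
rewrite [in RHS]big_ord_recl /= bin0 muln1 big_ord_recr /= bin_small ?muln0 ?addn0;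
  last by rewrite -!addnn; lia.
rewrite bin0; congr (_ + _); apply: eq_bigr => s _; rewrite /bump /= add1n doubleS bin0 muln1 //.
Qed.

Lemma BR i t : bo i.+2 t.+1 = 2 * bo i.+1 t.+1 + bo i t.
Proof. rewrite R1 R2 R1; lia. Qed.

Lemma BR0 i : bo i.+2 0 = 2 * bo i.+1 0.
Proof. rewrite R1 R2' R1; lia. Qed.

Lemma bo1 t : bo 1 t = 'C(0, t).
Proof. by rewrite /bo !big_ord_recr big_ord0 /=; case: t. Qed.

Lemma bo2 t : bo 2 t = 2 * 'C(0, t).
Proof. by rewrite /bo !big_ord_recr big_ord0 /=; case: t. Qed.

Lemma Bclosed i : forall t, 2 ^ (t.*2.+1) * bo i.+1 t = 2 ^ i.+1 * 'C(i - t, t).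
Proof.
suff : forall t, (2 ^ (t.*2.+1) * bo i.+1 t = 2 ^ i.+1 * 'C(i - t, t)) /\
       (2 ^ (t.*2.+1) * bo i.+2 t = 2 ^ i.+2 * 'C(i.+1 - t, t)) by move=> H t; case: (H t).
elim: i => [|i IH] t.
  split; first by rewrite bo1; case: t => [//|t]; rewrite !bin0n !muln0.
  rewrite bo2; case: t => [//|[|t]]; first by rewrite bin0n !muln0.
  by rewrite !bin0n !muln0.
split; first by case: (IH t).
case: t => [|t].
  rewrite BR0 /= !subn0 !bin0 !muln1.
  have := (IH 0).2; rewrite /= subn0 bin0 muln1 => H.
  by rewrite mulnCA H -expnS.
have [_ H1] := IH t.+1.
have [H0 _] := IH t.
have E1 : 2 ^ (t.+1.*2.+1) = 4 * 2 ^ (t.*2.+1) by rewrite doubleS !expnS mulnA.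
have E2 : 2 ^ i.+3 = 2 * 2 ^ i.+2 by rewrite expnS.
have E3 : 2 ^ i.+2 = 2 * 2 ^ i.+1 by rewrite expnS.
have EC : 'C(i.+2 - t.+1, t.+1) = 'C(i.+1 - t.+1, t.+1) + 'C(i - t, t).
  case: (leqP t i) => ti.
    by rewrite !subSS -binS subSn.
  rewrite !subSS.
  have -> : i - t = 0 by lia.
  have -> : i.+1 - t = 0 by lia.
  rewrite !bin0n; case: t ti {H0 H1 E1} => //; lia.
rewrite (BR i.+1 t) EC E1 E2 E3; rewrite E1 E3 in H1.

move: H0 H1; generalize (2 ^ t.*2.+1) (2 ^ i.+1) (bo i.+2 t.+1) (bo i.+1 t)
  ('C(i.+1 - t.+1, t.+1)) ('C(i - t, t)) => a b c d e f; nia.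
Qed.

Lemma AE i t : 2 * t.+1 * ae i.+1 t.+1 = i.+1 * bo i t.
Proof.
rewrite /ae big_ord_recl /= bin0n muln0 add0n /bo !big_distrr /=.
apply: eq_bigr => s _; rewrite /bump /= add1n.
have h1 := mul_bin_diag s.+1 t.
have h2 := mul_bin_diag i.+1 (s.*2.+1).
rewrite /= in h1 h2; rewrite doubleS.
move: h1 h2; generalize ('C(s, t)) ('C(s.+1, t.+1)) ('C(i, s.*2.+1)) ('C(i.+1, s.*2.+2)).
move=> a b c d h1 h2; rewrite -addnn in h2 *; nia.
Qed.

Lemma ae0 i : 2 * ae i.+1 0 = 2 ^ i.+1.
Proof.
have h1 := Bclosed i.+1 0; have h2 := Bclosed i 0.
rewrite /= !subn0 !bin0 !muln1 expn1 in h1 h2.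
have := R1 i.+1 0; rewrite !expnS in h1 h2 *; lia.
Qed.

Lemma ae00 : ae 0 0 = 1. Proof. by rewrite /ae big_ord_recl big_ord0. Qed.

Lemma ae0S t : ae 0 t.+1 = 0. Proof. by rewrite /ae big_ord_recl big_ord0. Qed.

Lemma ae1S t : ae 1 t.+1 = 0.
Proof. by rewrite /ae !big_ord_recr big_ord0 /=. Qed.

Definition Wt i t := ae i t * t`!.

Lemma Wt_val i t : Wt i.+2 t.+1 = 0 \/
  exists e, [/\ i = t.*2 + e, 0 < Wt i.+2 t.+1 &
    logn 2 (Wt i.+2 t.+1) + t.*2.+2 + Fv e = logn 2 i.+2 + i.+1 + Fv (t + e)].
Proof.
have hA := AE i.+1 t.
have hB := Bclosed i t.
have E : 2 ^ t.*2.+2 * Wt i.+2 t.+1 = i.+2 * 2 ^ i.+1 * ('C(i - t, t) * t`!).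
  rewrite /Wt factS expnS.
  move: hA hB; generalize (2 ^ t.*2.+1) (2 ^ i.+1) (ae i.+2 t.+1) (bo i.+1 t) ('C(i - t, t)) (t`!).
  move=> a b c d e f hA hB.
  have hA' := congr1 (fun x => x * a * f) hA.
  have hB' := congr1 (fun x => x * i.+2 * f) hB.
  simpl in hA', hB'. nia.
case: (leqP t (i - t)) => ti; last first.
  left; rewrite bin_small // mul0n muln0 in E.
  by move/eqP: E; rewrite muln_eq0 expn_eq0 /= => /eqP.
right; exists (i - t - t); split; first by lia.
  have : 0 < 2 ^ t.*2.+2 * Wt i.+2 t.+1.
    by rewrite E !muln_gt0 expn_gt0 /= bin_gt0 ti fact_gt0.
  by rewrite muln_gt0 => /andP[].
have hC := bin_fact ti.
have E2 : 2 ^ t.*2.+2 * Wt i.+2 t.+1 * (i - t - t)`! = i.+2 * 2 ^ i.+1 * (i - t)`!.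
  by rewrite E -mulnA -mulnA -hC !mulnA.
have Wp : 0 < Wt i.+2 t.+1.
  have : 0 < 2 ^ t.*2.+2 * Wt i.+2 t.+1.
    by rewrite E !muln_gt0 expn_gt0 /= bin_gt0 ti fact_gt0.
  by rewrite muln_gt0 => /andP[].
have p1 : 0 < 2 ^ t.*2.+2 by rewrite expn_gt0.
have p2 : 0 < 2 ^ i.+1 by rewrite expn_gt0.
have h3 : 0 < 2 ^ t.*2.+2 * Wt i.+2 t.+1 by rewrite muln_gt0 p1 Wp.
have h4 : 0 < i.+2 * 2 ^ i.+1 by rewrite muln_gt0 p2.
have L := congr1 (logn 2) E2.
rewrite (@lognM 2 _ _ h3 (fact_gt0 _)) (@lognM 2 _ _ p1 Wp) pfactorK // in L.
rewrite (@lognM 2 _ _ h4 (fact_gt0 _)) (@lognM 2 _ _ (ltn0Sn _) p2) pfactorK // in L.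
have -> : t + (i - t - t) = i - t by lia.
rewrite /Fv; lia.
Qed.

Lemma ae_pow i : ae i.+1 0 = 2 ^ i.
Proof. have := ae0 i; rewrite expnS; lia. Qed.

Lemma Wa i t d' : t < d' -> i <= d'.*2 -> 2 ^ Fv i %| 2 ^ d' * Wt i t.
Proof.
move=> td id.
case: t td => [|t] td.
  rewrite /Wt muln1; case: i id => [|i] id; first by rewrite /Fv /= expn0 dvd1n.
  rewrite ae_pow; apply: dvdn_mull; rewrite dvdn_exp2l //.
  by have := Fv_lt (ltn0Sn i); rewrite ltnS.
case: i id => [|[|i]] id.
- by rewrite /Wt ae0S mul0n muln0 dvdn0.
- by rewrite /Wt ae1S mul0n muln0 dvdn0.
case: (Wt_val i t) => [->|[e [ie Wp L]]]; first by rewrite muln0 dvdn0.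
have p2 : 0 < 2 ^ d' by rewrite expn_gt0.
have p3 : 0 < 2 ^ d' * Wt i.+2 t.+1 by rewrite muln_gt0 p2 Wp.
rewrite (@pfactor_dvdn 2 _ _ (isT : prime 2) p3) (@lognM 2 _ _ p2 Wp) pfactorK //.
have h1 := FvS i.+1.
have h2 := Fv_add i.+1 e.
have h3 : i.+1 + e = (t + e).*2.+1 by rewrite -!addnn; lia.
rewrite h3 Fv_odd Fv_double in h2.
rewrite -addnn in ie id; lia.
Qed.

Lemma Wb d t : t < d./2 -> 2 ^ (Fv d./2).+1 %| Wt d t.
Proof.
move=> td.
have hd := odd_double_half d.
case: t td => [|t] td.
  rewrite /Wt muln1; case: d td hd => [|d] td hd; first by [].
  rewrite ae_pow dvdn_exp2l //.
  have := Fv_lt td; rewrite -addnn in hd; lia.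
case: d td hd => [|[|i]] td hd; try by [].
case: (Wt_val i t) => [->|[e [ie Wp L]]]; first by rewrite dvdn0.
rewrite pfactor_dvdn // ?muln_gt0 ?expn_gt0 ?Wp //.
have h1 := FvS i.+1.
have h2 := Fv_add i.+1 e.
have h3 : i.+1 + e = (t + e).*2.+1 by rewrite -!addnn; lia.
rewrite h3 Fv_odd Fv_double in h2.
have h4 := Fv_half i.+2.
rewrite -!addnn in ie hd; lia.
Qed.

Fixpoint St l i := match l, i with
  | 0, 0 => 1
  | 0, _.+1 => 0
  | l'.+1, 0 => 0
  | l'.+1, i'.+1 => i'.+1 * St l' i'.+1 + St l' i'
  end.

Lemma St_small l : forall i, l < i -> St l i = 0.
Proof.
elim: l => [|l IH] [|i] //= h.
by rewrite !IH ?muln0 // ltnW.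
Qed.

Lemma St_diag l : St l l = 1.
Proof. by elim: l => [//|l IH] /=; rewrite IH St_small ?muln0. Qed.

Lemma St_1 l : St l.+1 1 = 1.
Proof. elim: l => [//|l IH]; rewrite /= in IH *; rewrite IH; by []. Qed.

Lemma ffact_mul j i : j * j ^_ i = j ^_ i.+1 + i * j ^_ i.
Proof.
case: (leqP i j) => ij.
  by rewrite ffactnSr [_ * (j - i)]mulnC -mulnDl subnK.
by rewrite ffact_small // ffact_small ?muln0 // ltnW.
Qed.

Lemma pow_St j l : j ^ l = \sum_(i < l.+1) St l i * j ^_ i.
Proof.
elim: l => [|l IH]; first by rewrite big_ord_recl big_ord0.
rewrite expnS IH big_distrr /=.
rewrite (eq_bigr (fun i : 'I_l.+1 => St l i * j ^_ i.+1 + i * St l i * j ^_ i)); last first.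
  by move=> i _; rewrite mulnCA ffact_mul mulnDr mulnCA mulnA.
rewrite big_split /= [in RHS]big_ord_recl /= mul0n add0n.
rewrite [in RHS](eq_bigr (fun i : 'I_l.+1 => i.+1 * St l i.+1 * j ^_ i.+1 + St l i * j ^_ i.+1)); last first.
  by move=> i _; rewrite /bump /= add0n mulnDl.
rewrite big_split /= addnC; congr (_ + _).
rewrite big_ord_recl /= mul0n add0n [in RHS]big_ord_recr /= (St_small (ltnSn l)) muln0 mul0n addn0.
by apply: eq_bigr => i _; rewrite /bump /= add1n.
Qed.

Lemma StS l i : St l.+1 i.+1 = i.+1 * St l i.+1 + St l i.
Proof. by []. Qed.

Lemma St_par m : 0 < m -> forall u, odd (St (m + u) m) = odd 'C(u + (m.-1)./2, u).
Proof.
elim: m => [//|m IH] _.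
case: m IH => [|m] IH u.
  by rewrite add1n St_1 /= addn0 binn.
elim: u => [|u IHu].
  by rewrite addn0 St_diag bin0.
rewrite addnS StS oddD oddM.
have e1 : (m.+2 + u = m.+1 + u.+1)%N by rewrite addSnnS.
rewrite IHu e1 (IH (ltn0Sn _) u.+1).
have h1 : m.+2.-1./2 = odd m + m./2 by rewrite /= uphalf_half.
have h2 : m.+1.-1./2 = m./2 by [].
have h3 : odd m.+2 = odd m by rewrite /= negbK.
rewrite h1 h2 h3; case: (odd m) => /=; last by rewrite add0n.
by rewrite !add1n !addnS !addSn [in RHS]binS oddD addbC.
Qed.

Lemma logn_add_pow s u z : 2 ^ s %| u -> 0 < z < 2 ^ s -> logn 2 (u + z) = logn 2 z.
Proof.
move=> /dvdnP[k ->] /andP[z0 zs].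
have [o co ze] := pfactor_coprime (isT : prime 2) z0.
set e := logn 2 z in ze *.
have es : e < s.
  rewrite -(@ltn_exp2l 2) //; apply: leq_ltn_trans zs.
  by apply: dvdn_leq z0 _; rewrite ze dvdn_mull.
have -> : k * 2 ^ s + z = (k * 2 ^ (s - e) + o) * 2 ^ e.
  by rewrite ze mulnDl -mulnA -expnD subnK // ltnW.
have oo : odd (k * 2 ^ (s - e) + o).
  rewrite oddD oddM oddX subn_eq0 leqNgt es /= andbF /=.
  by move: co; rewrite coprime2n.
have p0 : 0 < k * 2 ^ (s - e) + o by case: (k * _ + o) oo.
by rewrite lognM ?expn_gt0 // logn2_odd // pfactorK.
Qed.

Lemma Fv_split s u b : 2 ^ s %| u -> b < 2 ^ s -> Fv (u + b) = Fv u + Fv b.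
Proof.
move=> du; elim: b => [|b IH] hb; first by rewrite addn0 /Fv /= logn1 addn0.
rewrite addnS !FvS IH ?(ltnW hb) // -addnS (@logn_add_pow s u b.+1) //.
lia.
Qed.

Lemma bin_odd s u b : 2 ^ s %| u -> b < 2 ^ s -> odd 'C(u + b, u).
Proof.
move=> du hb.
have hC := bin_fact (leq_addr b u); rewrite addKn in hC.
have Cp : 0 < 'C(u + b, u) by rewrite bin_gt0 leq_addr.
have := congr1 (logn 2) hC.
rewrite !lognM ?muln_gt0 ?fact_gt0 //; have := Fv_split du hb; rewrite /Fv => e1 h.
have l0 : logn 2 'C(u + b, u) = 0 by lia.
by apply/negP => /negP; rewrite -dvdn2 -(expn1 2) pfactor_dvdn // l0.
Qed.

Lemma St_odd m l : 0 < m -> m <= l -> 2 ^ trunc_log 2 m %| l - m -> odd (St l m).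
Proof.
move=> m0 ml hd.
have -> : l = m + (l - m) by rewrite subnKC.
rewrite St_par // (bin_odd hd) //.
have := trunc_log_ltn m (isT : 1 < 2); rewrite expnS.
set q := 2 ^ trunc_log 2 m => hq.
have := odd_double_half m.-1; have : (odd m.-1 <= 1) by case: odd.
rewrite -addnn; lia.
Qed.

Local Open Scope ring_scope.

Lemma IC n : forall u, \sum_(k < n.+1) (-1) ^+ k * ('C(n, k))%:Z * ('C(k, u))%:Z =
  if n == u then (-1) ^+ u else 0.
Proof.
elim: n => [|n IH] u.
  by rewrite big_ord_recl big_ord0 addr0 /= bin0n; case: u.
rewrite big_ord_recl /= expr0 mul1r bin0 mul1r.
have E : \sum_(i < n.+1) (-1) ^+ bump 0 i * ('C(n.+1, bump 0 i))%:Z * ('C(bump 0 i, u))%:Z =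
   \sum_(i < n.+1) (-1) ^+ i.+1 * ('C(n, i.+1))%:Z * ('C(i.+1, u))%:Z
 - \sum_(i < n.+1) (-1) ^+ i * ('C(n, i))%:Z * ('C(i.+1, u))%:Z.
  rewrite -sumrB; apply: eq_bigr => i _; rewrite /bump /= add1n binS PoszD exprS; ring.
rewrite E addrA.
have -> : ('C(0, u))%:Z + \sum_(i < n.+1) (-1) ^+ i.+1 * ('C(n, i.+1))%:Z * ('C(i.+1, u))%:Z
   = \sum_(k < n.+1) (-1) ^+ k * ('C(n, k))%:Z * ('C(k, u))%:Z.
  rewrite [in RHS]big_ord_recl big_ord_recr /= (bin_small (ltnSn n)) mulr0 mul0r addr0 bin0 mulr1 expr0 mul1r.
  by congr (_ + _); apply: eq_bigr => i _; rewrite /bump /= add1n.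
clear E; case: u => [|u].
  under eq_bigr do rewrite bin0; under [X in _ - X]eq_bigr do rewrite bin0.
  by rewrite subrr.
under [X in _ - X]eq_bigr do rewrite binS PoszD mulrDr.
rewrite big_split /= IH IH opprD addrA subrr add0r eqSS exprS.
by case: (n == u); rewrite ?mulN1r ?oppr0.
Qed.

Lemma sum_widen_nat (F : nat -> nat) m n : (m <= n)%N ->
  (forall s, (m <= s)%N -> F s = 0%N) -> (\sum_(s < n) F s = \sum_(s < m) F s)%N.
Proof.
move=> mn Fz; rewrite (big_ord_widen _ F mn) [in RHS]big_mkcond /=.
by apply: eq_bigr => i _; case: ifP => // h; rewrite Fz // leqNgt h.
Qed.

Lemma sum_widen_int (F : nat -> int) m n : (m <= n)%N ->
  (forall s, (m <= s)%N -> F s = 0) -> \sum_(s < n) F s = \sum_(s < m) F s.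
Proof.
move=> mn Fz; rewrite (big_ord_widen _ F mn) [in RHS]big_mkcond /=.
by apply: eq_bigr => i _; case: ifP => // h; rewrite Fz // leqNgt h.
Qed.

Lemma Posz_sum n (F : nat -> nat) : (\sum_(i < n) F i)%N%:Z = \sum_(i < n) (F i)%:Z.
Proof. elim: n => [|n IH]; first by rewrite !big_ord0. by rewrite !big_ord_recr PoszD IH. Qed.

Lemma Wt_sum i t : Wt i t = (\sum_(s < i.+1) 'C(i, s.*2) * s ^_ t)%N.
Proof. by rewrite /Wt /ae big_distrl; apply: eq_bigr => s _ /=; rewrite -mulnA bin_ffact. Qed.

Lemma Newton k t : \sum_(i < k.+1) (-1) ^+ i * ('C(k, i))%:Z * (Wt i t)%:Z =
  if odd k then 0 else ((k./2) ^_ t)%:Z.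
Proof.
have W' : forall i : 'I_k.+1, (Wt i t)%:Z = \sum_(s < k.+1) (('C(i, s.*2) * s ^_ t)%N)%:Z.
  move=> i; rewrite Wt_sum (Posz_sum _ (fun s => 'C(i, s.*2) * s ^_ t)%N) (@sum_widen_int (fun s => (('C(i, s.*2) * s ^_ t)%N)%:Z) i.+1 k.+1) //.
  by move=> s hs; rewrite bin_small ?mul0n // -addnn; lia.
under eq_bigr => i _ do rewrite W' big_distrr /=.
rewrite exchange_big /=.
under eq_bigr => s _ do (under eq_bigr => i _ do rewrite PoszM mulrA mulrC; rewrite -big_distrr /= IC).
case: (boolP (odd k)) => ok.
  rewrite big1 // => s _; case: eqP => [ks|]; last by rewrite mulr0.
  exfalso; have : odd (nat_of_ord s).*2 by rewrite -ks.
  by rewrite odd_double.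
have hk : k = (k./2).*2 by have := odd_double_half k; rewrite (negbTE ok) add0n.
have hlt : (k./2 < k.+1)%N by rewrite {2}hk -addnn; lia.
rewrite (bigD1 (Ordinal hlt)) //= -hk eqxx big1 ?addr0; last first.
  move=> s hs; case: eqP => [ks|]; last by rewrite mulr0.
  have h2 := congr1 half ks; rewrite doubleK in h2.
  by move: hs; rewrite -val_eqE /= -h2 eqxx.
by rewrite -signr_odd (negbTE ok) expr0 mulr1.
Qed.

Definition cT (r : nat -> int) d i := \sum_(k < d.+1) r k * ('C(k, i))%:Z.
Definition Phi (r : nat -> int) d :=
  [/\ forall k, (d < k)%N -> r k = 0, ~~ (2%:Z %| r d)%Z &
      forall i, (i < d)%N -> (((2 ^ (Fv d).+1)%N)%:Z %| (i`!)%:Z * cT r d i)%Z].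

Lemma L2 x (c : int) : (0 < x)%N ->
  (((2 ^ (logn 2 x).+1)%N)%:Z %| x%:Z * c)%Z -> (2%:Z %| c)%Z.
Proof.
move=> x0; rewrite !dvdzE abszM /=.
have [c0|c0] := posnP `|c|; first by rewrite c0 dvdn0.
rewrite !pfactor_dvdn ?muln_gt0 ?x0 // lognM // => h.
by rewrite -(expn1 2) pfactor_dvdn //; lia.
Qed.

Lemma L3 x D V' W (c : int) :
  (((2 ^ (D + V'))%N)%:Z %| (x`!)%:Z * c)%Z -> (2 ^ Fv x %| 2 ^ D * W)%N ->
  (((2 ^ V')%N)%:Z %| W%:Z * c)%Z.
Proof.
rewrite !dvdzE !abszM /= => h1 h2.
have [c0|c0] := posnP `|c|; first by rewrite c0 muln0 dvdn0.
have [W0|W0] := posnP W; first by rewrite W0 mul0n dvdn0.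
have p2 : (0 < 2 ^ D)%N by rewrite expn_gt0.
move: h1 h2; rewrite !pfactor_dvdn ?muln_gt0 ?c0 ?W0 ?p2 ?fact_gt0 // !lognM ?fact_gt0 // pfactorK // /Fv.
lia.
Qed.

Lemma sum_double (F : nat -> int) n : \sum_(k < n.*2) F k = \sum_(j < n) (F j.*2 + F j.*2.+1).
Proof.
elim: n => [|n IH]; first by rewrite !big_ord0.
by rewrite doubleS !big_ord_recr /= IH addrA.
Qed.

Lemma step_div r d t : (forall k, (d < k)%N -> r k = 0) ->
  (forall i, (i < d)%N -> (((2 ^ (Fv d).+1)%N)%:Z %| (i`!)%:Z * cT r d i)%Z) ->
  (t < d./2)%N ->
  (((2 ^ (Fv d./2).+1)%N)%:Z %| (t`!)%:Z * cT (fun j => r j.*2) d./2 t)%Z.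
Proof.
move=> sup div td.
have hd := odd_double_half d.
have ob : (odd d <= 1)%N by case: odd.
set d' := d./2 in td hd *.
pose h k := if odd k then 0 else ((k./2) ^_ t)%:Z.
have E1 : (t`!)%:Z * cT (fun j => r j.*2) d' t = \sum_(j < d'.+1) r j.*2 * ((j ^_ t)%N)%:Z.
  rewrite /cT big_distrr; apply: eq_bigr => j _ /=.
  by rewrite mulrCA -PoszM mulnC bin_ffact.
have E2 : \sum_(j < d'.+1) r j.*2 * ((j ^_ t)%N)%:Z = \sum_(k < d'.+1.*2) r k * h k.
  rewrite (sum_double (fun k => r k * h k)); apply: eq_bigr => j _.
  by rewrite /h odd_double /= doubleK odd_double /= mulr0 addr0.
have E3 : \sum_(k < d'.+1.*2) r k * h k = \sum_(k < d.+1) r k * h k.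
  apply: (@sum_widen_int (fun k => r k * h k)); first by rewrite doubleS -addnn; lia.
  by move=> s hs; rewrite sup ?mul0r.
have E4 : \sum_(k < d.+1) r k * h k =
   \sum_(k < d.+1) r k * \sum_(i < d.+1) (-1) ^+ i * ('C(k, i))%:Z * (Wt i t)%:Z.
  apply: eq_bigr => k _; congr (_ * _).
  rewrite /h -Newton (@sum_widen_int (fun i => (-1) ^+ i * ('C(k, i))%:Z * (Wt i t)%:Z) k.+1 d.+1) //.
  by move=> s hs; rewrite bin_small // mulr0 mul0r.
have E5 : \sum_(k < d.+1) r k * \sum_(i < d.+1) (-1) ^+ i * ('C(k, i))%:Z * (Wt i t)%:Z
   = \sum_(i < d.+1) (-1) ^+ i * ((Wt i t)%:Z * cT r d i).
  under eq_bigr do rewrite big_distrr /=.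
  rewrite exchange_big /=; apply: eq_bigr => i _.
  rewrite /cT !big_distrr /=; apply: eq_bigr => k _; ring.
rewrite E1 E2 E3 E4 E5; apply: rpred_sum => i _; apply: dvdz_mull.
have [id|id] := ltnP i d.
  apply: (@L3 i d'); last first.
    by apply: Wa; rewrite // -addnn; lia.
  have := div i id; congr (_ %| _)%Z; congr (Posz (2 ^ _)).
  by rewrite Fv_half addnS.
have -> : nat_of_ord i = d by have := ltn_ord i; lia.
apply: dvdz_mulr; rewrite dvdzE /=; exact: Wb.
Qed.

Lemma step_par r d : (forall k, (d < k)%N -> r k = 0) -> ~~ (2%:Z %| r d)%Z ->
  (forall i, (i < d)%N -> (((2 ^ (Fv d).+1)%N)%:Z %| (i`!)%:Z * cT r d i)%Z) ->
  ~~ (2%:Z %| r (d./2).*2)%Z.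
Proof.
move=> sup odt div.
have hd := odd_double_half d.
case: (boolP (odd d)) => od; last by rewrite (negbTE od) add0n in hd; rewrite hd.
rewrite od in hd.
set e := d./2.*2 in hd *.
have de : d = e.+1 by rewrite -hd.
have h : (((2 ^ (Fv d).+1)%N)%:Z %| (e`!)%:Z * cT r d e)%Z by apply: div; rewrite de.
rewrite de /cT !big_ord_recr /= big1 ?add0r in h; last first.
  by move=> k _; rewrite bin_small // mulr0.
rewrite binn binSn mulr1 /e Fv_odd -/e in h.
have h2 := L2 (fact_gt0 e) h.
apply/negP => h3.
have : (2%:Z %| r e.+1 * (e.+1)%:Z)%Z.
  by rewrite -(rpredDl _ h3).
rewrite dvdzE abszM /= Euclid_dvdM // => /orP[].
  by move: odt; rewrite de dvdzE => /negP.
by rewrite dvdn2 /= /e odd_double.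
Qed.

Lemma step r d : Phi r d -> Phi (fun j => r j.*2) d./2.
Proof.
case=> sup odt div; split.
- move=> k hk; apply: sup.
  have hd := odd_double_half d; have ob : (odd d <= 1)%N by case: odd.
  rewrite -addnn in hd *; lia.
- exact: step_par.
- move=> t td; exact: step_div.
Qed.

Lemma PoszX' j l : ((j ^ l)%N)%:Z = (j%:Z) ^+ l.
Proof. by rewrite -!natz natrX. Qed.

Lemma Phi_ext r1 r2 d : r1 =1 r2 -> Phi r1 d -> Phi r2 d.
Proof.
move=> e [s o dv]; split.
- by move=> k hk; rewrite -e s.
- by rewrite -e.
- move=> i hi; have := dv i hi; congr (_ %| _)%Z; congr (_ * _).
  by apply: eq_bigr => k _; rewrite e.
Qed.

Lemma Phi_base n : Phi (fun k => (-1) ^+ k * ('C(n, k))%:Z) n.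
Proof.
split.
- by move=> k hk; rewrite bin_small // mulr0.
- by rewrite binn mulr1 dvdzE absz_sign.
- move=> i hi; rewrite /cT IC; case: eqP => [ni|_]; first by move: hi; rewrite ni ltnn.
  by rewrite mulr0 dvdz0.
Qed.

Definition rr n a j : int := (-1) ^+ (2 ^ a * j) * ('C(n, 2 ^ a * j))%:Z.

Lemma Phi_iter n a : Phi (rr n a) (n %/ 2 ^ a).
Proof.
elim: a => [|a IH].
  rewrite expn0 divn1; apply: Phi_ext (Phi_base n) => j.
  by rewrite /rr mul1n.
have := step IH; rewrite -divn2 -divnMA -expnSr.
apply: Phi_ext => j; rewrite /rr expnSr -mulnA mul2n.
by [].
Qed.

Lemma sum_mult (F : nat -> int) q M : (0 < q)%N ->
  \sum_(k < q * M) (if (q %| k)%N then F k else 0) = \sum_(j < M) F (q * j)%N.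
Proof.
move=> q0; elim: M => [|M IH]; first by rewrite muln0 !big_ord0.
rewrite mulnS addnC big_split_ord /= IH big_ord_recr /=; congr (_ + _).
case: q q0 IH => [//|q] _ _.
rewrite big_ord_recl /= addn0 dvdn_mulr // big1 ?addr0 //.
move=> i _; rewrite /bump /= add1n dvdn_addr ?dvdn_mulr //.
case: ifP => // /dvdn_leq; have := ltn_ord i; lia.
Qed.

Lemma final_val (A B o : int) F : (((2 ^ F.+1)%N)%:Z %| A)%Z -> ~~ (2%:Z %| o)%Z ->
  B = ((2 ^ F)%N)%:Z * o -> A + B != 0 /\ logn 2 (absz (A + B)) = F.
Proof.
case/dvdzP => a -> oo ->.
have E : a * ((2 ^ F.+1)%N)%:Z + ((2 ^ F)%N)%:Z * o = ((2 ^ F)%N)%:Z * (a * 2 + o).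
  rewrite expnS PoszM; ring.
rewrite E.
have yo : ~~ (2%:Z %| a * 2 + o)%Z.
  by rewrite rpredDl // dvdz_mull.
have y0 : a * 2 + o != 0 by apply: contraNneq yo => ->; rewrite dvdz0.
split; first by rewrite mulf_neq0 // -lt0n expn_gt0.
rewrite abszM /= lognM ?expn_gt0 ?absz_gt0 // pfactorK // logn2_odd ?addn0 //.
by move: yo; rewrite dvdzE /= dvdn2 negbK.
Qed.

Unset Implicit Arguments.

Theorem theorem1p8 (alpha n l : nat) :
  (1 <= n %/ 2 ^ alpha)%N ->
  (n %/ 2 ^ alpha <= l)%N ->
  l = n %/ 2 ^ alpha %[mod 2 ^ trunc_log 2 (n %/ 2 ^ alpha)] ->
  let S : int := \sum_(0 <= k < n.+1 | (2 ^ alpha %| k)%N)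
        ('C(n, k))%:Z * (-1) ^+ k * ((k %/ 2 ^ alpha)%N%:Z) ^+ l in
  S != 0 /\ ord2 S = logn 2 (n %/ 2 ^ alpha)`!.
Proof.
move=> m1 ml lm S.
set q := (2 ^ alpha)%N in m1 ml lm S *.
set m := (n %/ q)%N in m1 ml lm S *.
have q0 : (0 < q)%N by rewrite expn_gt0.
have [sup odt dv] := Phi_iter n alpha; rewrite -/q -/m in sup odt dv.
have SE : S = \sum_(j < m.+1) rr n alpha j * (j%:Z) ^+ l.
  rewrite /S big_mkord big_mkcond /=.
  rewrite -(@sum_widen_int (fun k => if (q %| k)%N then ('C(n, k))%:Z * (-1) ^+ k * ((k %/ q)%N%:Z) ^+ l else 0) n.+1 (q * m.+1)); last first.
  - by move=> s hs; case: ifP => // _; rewrite bin_small // mul0r mul0r.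
  - by have := ltn_ceil n q0; rewrite -/m mulnC.
  rewrite (sum_mult (fun k => ('C(n, k))%:Z * (-1) ^+ k * ((k %/ q)%N%:Z) ^+ l)) //; apply: eq_bigr => j _.
  by rewrite mulKn // /rr -/q [_ * ((-1) ^+ _)]mulrC.
have SE2 : S = \sum_(i < l.+1) (St l i)%:Z * ((i`!)%:Z * cT (rr n alpha) m i).
  rewrite SE.
  under eq_bigr => j _ do rewrite -PoszX' pow_St (Posz_sum _ (fun i => St l i * j ^_ i)%N) big_distrr /=.
  rewrite exchange_big /=; apply: eq_bigr => i _.
  rewrite /cT !big_distrr /=; apply: eq_bigr => j _.
  rewrite PoszM -(bin_ffact j i) PoszM; ring.
have SE3 : S = \sum_(i < m) (St l i)%:Z * ((i`!)%:Z * cT (rr n alpha) m i)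
               + (St l m)%:Z * ((m`!)%:Z * rr n alpha m).
  rewrite SE2 (@sum_widen_int (fun i => (St l i)%:Z * ((i`!)%:Z * cT (rr n alpha) m i)) m.+1 l.+1) //.
    rewrite big_ord_recr /=; congr (_ + _ * (_ * _)).
    rewrite /cT big_ord_recr /= big1 ?add0r ?binn ?mulr1 //.
    by move=> j _; rewrite bin_small // mulr0.
  move=> s hs; rewrite /cT big1 ?mulr0 //.
  by move=> j _; rewrite bin_small ?mulr0 //; apply: leq_trans hs.
have [o1 co1 fo1] := pfactor_coprime (isT : prime 2) (fact_gt0 m).
have hd : (2 ^ trunc_log 2 m %| l - m)%N by rewrite -eqn_mod_dvd // lm.
have so := St_odd m1 ml hd.
have := @final_val (\sum_(i < m) (St l i)%:Z * ((i`!)%:Z * cT (rr n alpha) m i))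
   ((St l m)%:Z * ((m`!)%:Z * rr n alpha m)) ((St l m)%:Z * o1%:Z * rr n alpha m) (Fv m).
rewrite -SE3 /ord2 => [[]] //.
- apply: rpred_sum => i _; apply: dvdz_mull; exact: dv.
- move: odt; rewrite !dvdzE !abszM /= !Euclid_dvdM // !dvdn2 so.
  by move: co1; rewrite coprime2n => ->.
- rewrite fo1 PoszM /Fv; ring.
Qed.
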